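(* Let $A_0$ be a commutative Noetherian ring, $d_1,\dots,d_g\in\mathbb{N}$, and let $A=A_0[Y_1,\dots,Y_g]$ be $\mathbb{Z}^2$-graded by $\deg Y_j=(d_j,1)$. Let $N$ be a finitely generated $\mathbb{Z}^2$-graded $A$-module and $\rho_N(v)=\sup\{i\in\mathbb{Z} : N_{(i,v)}\neq0\}$. Then there exists $v_0$ such that either $\rho_N(v)=-\infty$ for all $v\ge v_0$, or there are $\delta\in\{d_1,\dots,d_g\}$ and $c\in\mathbb{Z}$ with $\rho_N(v)=\delta v+c$ for all $v\ge v_0$.
   Context: Elements of $A_0$ have degree $(0,0)$; the supremum of the empty set is $-\infty$. *)

(* Defs.v *)
From mathcomp Require Import all_boot all_order all_algebra.
Set Implicit Arguments. Unset Strict Implicit. Unset Printing Implicit Defensive.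
Import Order.TTheory GRing.Theory Num.Theory.
Local Open Scope ring_scope.

Definition is_ideal (R : comPzRingType) (I : R -> Prop) : Prop :=
  [/\ I 0, (forall x y, I x -> I y -> I (x + y)) & (forall r x, I x -> I (r * x))].

Definition noetherian (R : comPzRingType) : Prop :=
  forall I : nat -> R -> Prop, (forall n, is_ideal (I n)) ->
    (forall n x, I n x -> I n.+1 x) ->
    exists n0, forall n x, (n0 <= n)%N -> I n x -> I n0 x.

Definition is_submod (R : comPzRingType) (M : lmodType R) (P : M -> Prop) : Prop :=
  [/\ P 0, (forall x y, P x -> P y -> P (x + y)) & (forall (a : R) x, P x -> P (a *: x))].

(* H i v is the homogeneous component N_(i,v); M is their internal direct sum. *)
Definition Z2graded (R : comPzRingType) (M : lmodType R) (H : int -> int -> M -> Prop) : Prop :=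
  [/\ (forall i v, is_submod (H i v)),
      (forall x : M, exists (s : seq (int * int)) (f : int * int -> M),
          (forall p, H p.1 p.2 (f p)) /\ x = \sum_(p <- s) f p) &
      (forall (s : seq (int * int)) (f : int * int -> M), uniq s ->
          (forall p, H p.1 p.2 (f p)) -> \sum_(p <- s) f p = 0 ->
          forall p, p \in s -> f p = 0)].

(* The A = A0[Y_1..Y_g]-module M (A0 acting by *:, Y_j acting by Y j)
   is finitely generated: some finite list of elements lies in no proper
   A-submodule. *)
Definition fin_gen (R : comPzRingType) (M : lmodType R) (g : nat) (Y : 'I_g -> M -> M) : Prop :=
  exists gens : seq M, forall P : M -> Prop,
    is_submod P -> (forall j x, P x -> P (Y j x)) ->
    (forall x, x \in gens -> P x) -> forall x, P x.

Definition piece_nz (R : comPzRingType) (M : lmodType R) (H : int -> int -> M -> Prop) (i v : int) : Prop :=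
  exists x, H i v x /\ x <> 0.

Definition rho_is_minfty (R : comPzRingType) (M : lmodType R) (H : int -> int -> M -> Prop) (v : int) : Prop :=
  forall i, ~ piece_nz H i v.

Definition rho_is (R : comPzRingType) (M : lmodType R) (H : int -> int -> M -> Prop) (v r : int) : Prop :=
  piece_nz H r v /\ forall i, r < i -> ~ piece_nz H i v.

(* Main.v *)
Require Import Defs.
From mathcomp Require Import all_boot all_order all_algebra.
Import Order.TTheory GRing.Theory Num.Theory.
Local Open Scope ring_scope.
From mathcomp Require Import ring lra zify.
From Stdlib Require Import Classical.
Set Implicit Arguments. Unset Strict Implicit. Unset Printing Implicit Defensive.
Definition leg (n : nat) (a b : nat -> nat) := forall j, (j < n)%N -> (a j <= b j)%N.

Section EL.
Variables (g : nat) (dn : nat -> nat).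

Definition EL (P : int -> int -> Prop) := exists v0 : int,
 (forall v, v0 <= v -> forall i, ~ P v i) \/
 (exists j c, (j < g)%N /\ forall v, v0 <= v ->
    P v ((dn j)%:Z * v + c) /\ forall i, (dn j)%:Z * v + c < i -> ~ P v i).

Lemma ex_ge2 (a b : int) : exists w, a <= w /\ b <= w.
Proof. case: (lerP a b) => h; [exists b | exists a]; lia. Qed.

Lemma EL_ext P Q : (forall v i, P v i <-> Q v i) -> EL P -> EL Q.
Proof.
move=> e [v0 [h|[j [c [hj h]]]]]; exists v0; [left|right].
  by move=> v hv i /e; apply: h.
exists j, c; split=> // v hv; have [h1 h2] := h v hv; split; first exact: (proj1 (e _ _) h1).
by move=> i hi /e; apply: h2.
Qed.

Lemma EL_False : EL (fun _ _ => False).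
Proof. exists 0; left => v _ i; by []. Qed.

Lemma EL_dom P Q v1 v2 j1 c1 j2 c2 w :
  (forall v, v1 <= v -> P v ((dn j1)%:Z * v + c1) /\ forall i, (dn j1)%:Z * v + c1 < i -> ~ P v i) ->
  (forall v, v2 <= v -> Q v ((dn j2)%:Z * v + c2) /\ forall i, (dn j2)%:Z * v + c2 < i -> ~ Q v i) ->
  (forall v, w <= v -> (dn j2)%:Z * v + c2 <= (dn j1)%:Z * v + c1) -> (j1 < g)%N ->
  EL (fun v i => P v i \/ Q v i).
Proof.
move=> hP hQ hw hj.
have [u1 [h1 h2]] := ex_ge2 v1 v2; have [u [h3 h4]] := ex_ge2 u1 w.
exists u; right; exists j1, c1; split=> // v hv.
have [hp1 hp2] := hP v ltac:(lia); have [hq1 hq2] := hQ v ltac:(lia).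
have := hw v ltac:(lia) => hle.
split; first by left.
move=> i hi [/hp2|/hq2]; [apply; lia | apply; lia].
Qed.

Lemma EL_or P Q : EL P -> EL Q -> EL (fun v i => P v i \/ Q v i).
Proof.
move=> [v1 [h1|[j1 [c1 [hj1 h1]]]]] [v2 [h2|[j2 [c2 [hj2 h2]]]]].
- have [w [hw1 hw2]] := ex_ge2 v1 v2; exists w; left => v hv i [].
    by apply: h1; lia.
  by apply: h2; lia.
- have [w [hw1 hw2]] := ex_ge2 v1 v2; exists w; right; exists j2, c2; split=> // v hv.
  have [a b] := h2 v ltac:(lia); split; first by right.
  move=> i hi [|]; [by apply: h1; lia | by apply: b].
- have [w [hw1 hw2]] := ex_ge2 v1 v2; exists w; right; exists j1, c1; split=> // v hv.
  have [a b] := h1 v ltac:(lia); split; first by left.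
  move=> i hi [|]; [by apply: b | by apply: h2; lia].
- have key : forall (a1 a2 : nat) (b1 b2 : int), (a2 < a1)%N \/ (a2 = a1 /\ b2 <= b1) ->
     exists w, forall v : int, w <= v -> a2%:Z * v + b2 <= a1%:Z * v + b1.
    move=> a1 a2 b1 b2 [h|[-> h]].
      exists (`|b2 - b1| : int) => v hv.
      have : 0 <= (a1%:Z - a2%:Z - 1) * v by apply: mulr_ge0; lia.
      have : 0 <= v by lia.
      have : b2 - b1 <= `|b2 - b1| by apply: ler_norm.
      nia.
    by exists 0 => v _; lia.
  have tot : ((dn j2 < dn j1)%N \/ (dn j2 = dn j1 /\ c2 <= c1)) \/
             ((dn j1 < dn j2)%N \/ (dn j1 = dn j2 /\ c1 <= c2)).
    case: (ltngtP (dn j2) (dn j1)) => h; [by left; left | by right; left | ].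
    case: (lerP c2 c1) => h'; [left; right | right; right]; split => //; lia.
  case: tot => /key [w hw].
    exact: (EL_dom h1 h2 hw).
  apply: EL_ext (EL_dom h2 h1 hw hj2) => v i; tauto.
Qed.

Lemma EL_bigor (P : nat -> int -> int -> Prop) n :
  (forall k, (k < n)%N -> EL (P k)) -> EL (fun v i => exists k, (k < n)%N /\ P k v i).
Proof.
elim: n => [|n IH] h.
  by apply: EL_ext EL_False => v i; split => //; case=> k [].
apply: EL_ext (EL_or (IH (fun k hk => h k (ltnW hk))) (h n (ltnSn n))) => v i.
split.
  case=> [[k [hk p]]|p]; [exists k; split => //; exact: ltnW | by exists n].
case=> k [hk p]; move: hk; rewrite ltnS leq_eqVlt => /orP[/eqP e|hk].
  by right; rewrite -e.
by left; exists k.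
Qed.

Lemma EL_shift P (a b : int) : EL P -> EL (fun v i => P (v - b) (i - a)).
Proof.
move=> [v0 [h|[j [c [hj h]]]]].
  exists (v0 + b); left => v hv i; apply: h; lia.
exists (v0 + b); right; exists j, (c + a - (dn j)%:Z * b); split => // v hv.
have [h1 h2] := h (v - b) ltac:(lia).
split.
  have -> : (dn j)%:Z * v + (c + a - (dn j)%:Z * b) - a = (dn j)%:Z * (v - b) + c by ring.
  exact: h1.
move=> i hi; apply: h2.
have -> : (dn j)%:Z * (v - b) + c = (dn j)%:Z * v + (c + a - (dn j)%:Z * b) - a by ring.
lia.
Qed.

Lemma EL_const (Q : Prop) P : EL P -> EL (fun v i => Q /\ P v i).
Proof.
move=> h; case: (classic Q) => q.
  by apply: EL_ext h => v i; tauto.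
by apply: EL_ext EL_False => v i; tauto.
Qed.

End EL.

Section Box.
Variables (g : nat) (dn : nat -> nat).
Definition wt (a : nat -> nat) : int := \sum_(j < g) (a j)%:Z * (dn j)%:Z.
Definition sz (a : nat -> nat) : int := \sum_(j < g) (a j)%:Z.
Definition PS (S : (nat -> nat) -> Prop) (v i : int) :=
  exists a, S a /\ v = sz a /\ i = wt a.
Definition inbox (c : nat -> option nat) (a : nat -> nat) :=
  forall j m, (j < g)%N -> c j = Some m -> (a j <= m)%N.

Lemma Posz_sum (F : 'I_g -> nat) : (\sum_j F j)%:Z = \sum_j (F j)%:Z.
Proof. by elim/big_rec2: _ => // i a b _ <-; rewrite PoszD. Qed.

Lemma box_EL c : EL g dn (PS (inbox c)).
Proof.
case: (classic (exists j0 : 'I_g, c j0 = None)) => [[j0 hj0]|hno].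
  case: (@arg_maxnP _ j0 (fun j => c j == None) (fun j : 'I_g => dn j)).
    by apply/eqP.
  move=> jm /eqP hjm hmax.
  set dl := dn jm.
  pose bnd j := match c j with Some m => if (dl < dn j)%N then m else 0%N | None => 0%N end.
  pose Cn := (\sum_(j < g) bnd j)%N.
  pose cc := \sum_(j < g) (bnd j)%:Z * ((dn j)%:Z - dl%:Z).
  have bjm : bnd jm = 0%N by rewrite /bnd hjm.
  have eS1 : Cn%:Z = \sum_(j < g | j != jm) (bnd j)%:Z.
    by rewrite Posz_sum (bigD1 jm) //= bjm add0r.
  have ecc : cc = \sum_(j < g | j != jm) (bnd j)%:Z * (dn j)%:Z -
                 dl%:Z * \sum_(j < g | j != jm) (bnd j)%:Z.
    rewrite /cc (bigD1 jm) //= bjm mul0r add0r mulr_sumr -sumrB.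
    by apply: eq_bigr => j _; ring.
  exists Cn%:Z; right; exists (nat_of_ord jm), cc; split => // v hv.
  have [nn ev] : exists n : nat, v = n%:Z.
    exists (absz v); rewrite gez0_abs //; lia.
  subst v; have hn : (Cn <= nn)%N by lia.
  split.
    pose a j := if j == nat_of_ord jm then (nn - Cn)%N else bnd j.
    have aj : forall j : 'I_g, j != jm -> a j = bnd j.
      by move=> j hj; rewrite /a ifF //; apply/negbTE.
    exists a; split; [|split].
    - move=> j m hj e; rewrite /a; case: eqP => ej.
        by move: e; rewrite ej hjm.
      by rewrite /bnd e; case: ifP.
    - rewrite /sz (bigD1 jm) //=.
      have -> : \sum_(j < g | j != jm) (a j)%:Z = Cn%:Z.
        by rewrite eS1; apply: eq_bigr => j hj; rewrite aj.
      rewrite /a eqxx; lia.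
    - rewrite /wt (bigD1 jm) //= ecc -eS1 /a eqxx.
      have -> : \sum_(j < g | j != jm) (a j)%:Z * (dn j)%:Z =
                \sum_(j < g | j != jm) (bnd j)%:Z * (dn j)%:Z.
        by apply: eq_bigr => j hj; rewrite aj.
      rewrite -/dl; have -> : ((nn - Cn)%N)%:Z = nn%:Z - Cn%:Z by lia.
      ring.
  move=> i hi [a [ha [ev ei]]]; move: hi; rewrite ev ei.
  apply/negP; rewrite -leNgt.
  rewrite /cc /sz /wt mulr_sumr -big_split /=; apply: ler_sum => j _.
  rewrite /bnd; case e: (c j) => [m|].
    have := ha j m (ltn_ord j) e; case: ltnP => h; nia.
  have := hmax j; rewrite e => /(_ isT); rewrite -/dl => h; nia.
exists ((\sum_(j < g) (odflt 0%N (c j))%:Z) + 1); left.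
move=> v hv i [a [ha [ev _]]].
have : sz a <= \sum_(j < g) (odflt 0%N (c j))%:Z.
  apply: ler_sum => j _; case e: (c j) => [m|] /=.
    by rewrite lez_nat; apply: ha e.
  by exfalso; apply: hno; exists j.
lia.
Qed.

Definition SL (c : nat -> option nat) (L : nat -> nat -> nat) n a :=
  inbox c a /\ forall k, (k < n)%N -> ~ leg g (L k) a.

Definition newc (c : nat -> option nat) (l : nat -> nat) j :=
  fun k => if k == j then Some (match c j with Some m => minn m (l j).-1 | None => (l j).-1 end)
           else c k.

Lemma SL_EL L n : forall c, EL g dn (PS (SL c L n)).
Proof.
elim: n => [|n IH] c.
  apply: EL_ext (box_EL c) => v i; split; case=> a [h1 h2]; exists a; split => //.
    by case: h1.
have ext : forall v i, (exists j, (j < g)%N /\ ((0 < L n j)%N /\ PS (SL (newc c (L n) j) L n) v i))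
   <-> PS (SL c L n.+1) v i.
  move=> v i; split.
    case=> j [hj [hl [a [[hb hk] hr]]]]; exists a; split => //; split.
      move=> k m hk' e; have := hb k; rewrite /newc; case: eqP => ekj.
        subst k; move=> /(_ _ hk' erefl); rewrite e => h; apply: leq_trans h _.
        exact: geq_minl.
      by move=> /(_ m hk' e).
    move=> k; rewrite ltnS leq_eqVlt => /orP[/eqP ->|hkn]; last exact: hk.
    move=> hle; have := hb j _ hj; rewrite /newc eqxx => /(_ _ erefl) h.
    have := hle j hj; case: (c j) h => [m|] h h'.
      have := leq_trans h (geq_minr _ _); lia.
    lia.
  case=> a [[hb hk] hr].
  have [j [hj hlt]] : exists j, (j < g)%N /\ (a j < L n j)%N.
    apply: NNPP => hno; apply: (hk n (ltnSn n)) => j hj; rewrite leqNgt; apply/negP => h.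
    by apply: hno; exists j.
  exists j; split => //; split; first lia.
  exists a; split => //; split.
    move=> k m hk' e; move: e; rewrite /newc; case: eqP => ekj.
      subst k; case e': (c j) => [m'|] [<-].
        rewrite leq_min (hb j m' hj e'); lia.
      lia.
    by apply: hb.
  by move=> k hk'; apply: hk; apply: ltnW.
apply: EL_ext; first exact: ext.
apply: EL_bigor => k hk; apply: EL_const; exact: IH.
Qed.

End Box.
Definition upset n (U : (nat -> nat) -> Prop) := forall a b, leg n a b -> U a -> U b.
Definition fgen n (U : (nat -> nat) -> Prop) := exists k (L : nat -> nat -> nat),
  (forall s, (s < k)%N -> U (L s)) /\ forall a, U a -> exists s, (s < k)%N /\ leg n (L s) a.

Lemma leg_trans n a b c : leg n a b -> leg n b c -> leg n a c.
Proof. by move=> h1 h2 j hj; apply: leq_trans (h1 j hj) (h2 j hj). Qed.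

Lemma dickson n U : upset n U -> fgen n U.
Proof.
elim: n U => [|n IH] U hU.
  case: (classic (exists a, U a)) => [[a ha]|hno].
    exists 1%N, (fun _ => a); split => [s _|b hb] //.
    by exists 0%N; split => // j.
  exists 0%N, (fun _ _ => 0%N); split => // a ha; exfalso; apply: hno; by exists a.
pose upd (b : nat -> nat) t := fun j => if j == n then t else b j.
pose Ut t b := U (upd b t).
have hUt : forall t, upset n (Ut t).
  move=> t b b' hb; apply: hU => j hj; rewrite /upd; case: eqP => // ej.
  by apply: hb; rewrite ltnS leq_eqVlt in hj; case/orP: hj => [/eqP|].
have mono : forall t t' b, (t <= t')%N -> Ut t b -> Ut t' b.
  move=> t t' b htt; apply: hU => j hj; rewrite /upd; by case: eqP.
have self : forall a, U a -> Ut (a n) a.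
  move=> a; apply: hU => j hj; rewrite /upd; case: eqP => [->|] //.
have liftle : forall l a t, leg n l a -> (t <= a n)%N -> leg n.+1 (upd l t) a.
  move=> l a t hl ht j hj; rewrite /upd; case: eqP => [->|ej] //.
  by apply: hl; rewrite ltnS leq_eqVlt in hj; case/orP: hj => [/eqP|].
pose Uinf b := exists t, Ut t b.
have hUinf : upset n Uinf.
  by move=> a b hab [t ht]; exists t; apply: hUt hab ht.
have [kI [LI [hLI1 hLI2]]] := IH Uinf hUinf.
have [T hT] : exists T, forall s, (s < kI)%N -> Ut T (LI s).
  clear hLI2; elim: kI hLI1 => [|k IHk] h; first by exists 0%N.
  have [T1 h1] := IHk (fun s hs => h s (ltnW hs)).
  have [t2 h2] := h k (ltnSn k).
  exists (maxn T1 t2) => s; rewrite ltnS leq_eqVlt => /orP[/eqP->|hs].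
    by apply: mono h2; apply: leq_maxr.
  by apply: mono (h1 s hs); apply: leq_maxl.
pose cov (C : (nat -> nat) -> Prop) k (L : nat -> nat -> nat) :=
  (forall s, (s < k)%N -> U (L s)) /\ forall a, U a -> C a -> exists s, (s < k)%N /\ leg n.+1 (L s) a.
have cov_or : forall C1 C2 k1 L1 k2 L2, cov C1 k1 L1 -> cov C2 k2 L2 ->
    cov (fun a => C1 a \/ C2 a) (k1 + k2) (fun s => if (s < k1)%N then L1 s else L2 (s - k1)%N).
  move=> C1 C2 k1 L1 k2 L2 [h1 h2] [h3 h4]; split.
    move=> s hs; case: ltnP => h; first exact: h1.
    by apply: h3; lia.
  move=> a ha [/(h2 a ha)|/(h4 a ha)] [s [hs hl]].
    by exists s; rewrite hs; split => //; lia.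
  exists (k1 + s)%N; split; first lia.
  by rewrite ltnNge leq_addr /= addKn.
have cov_imp : forall (C C' : (nat -> nat) -> Prop) k L, (forall a, C a -> C' a) -> cov C' k L -> cov C k L.
  move=> C C' k L hC [h1 h2]; split => // a ha hc; exact: h2 a ha (hC a hc).
have layer : forall t, exists k L, cov (fun a => a n = t) k L.
  move=> t; have [k [L [h1 h2]]] := IH (Ut t) (hUt t).
  exists k, (fun s => upd (L s) t); split; first exact: h1.
  move=> a ha e; have := self a ha; rewrite e => hat.
  have [s [hs hle]] := h2 a hat; exists s; split => //.
  by apply: liftle hle _; rewrite e.
have top : exists k L, cov (fun a => (T <= a n)%N) k L.
  have [k [L [h1 h2]]] := IH (Ut T) (hUt T).
  exists k, (fun s => upd (L s) T); split; first exact: h1.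
  move=> a ha hTa.
  have [s [hs hle]] := hLI2 a (ex_intro _ (a n) (self a ha)).
  have [s' [hs' hle']] := h2 _ (hT s hs).
  exists s'; split => //; apply: liftle hTa.
  exact: leg_trans hle' hle.
have below : forall T', exists k L, cov (fun a => (a n < T')%N) k L.
  elim => [|T' IHT].
    by exists 0%N, (fun _ _ => 0%N); split.
  have [k1 [L1 c1]] := IHT; have [k2 [L2 c2]] := layer T'.
  exists (k1 + k2)%N, (fun s => if (s < k1)%N then L1 s else L2 (s - k1)%N).
  apply: cov_imp (cov_or _ _ _ _ _ _ c1 c2) => a; rewrite ltnS leq_eqVlt => /orP[/eqP|]; tauto.
have [k1 [L1 c1]] := below T; have [k2 [L2 c2]] := top.
have [hh1 hh2] := cov_or _ _ _ _ _ _ c1 c2.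
exists (k1 + k2)%N, (fun s => if (s < k1)%N then L1 s else L2 (s - k1)%N); split => // a ha.
by apply: hh2 => //; case: (ltnP (a n) T); [left|right].
Qed.
Fixpoint mono (T : Type) (f : nat -> T -> T) (n : nat) (a : nat -> nat) (x : T) : T :=
  match n with 0 => x | n'.+1 => mono f n' a (iter (a n') (f n') x) end.

Lemma mono_ext T (f : nat -> T -> T) n a b x :
  (forall j, (j < n)%N -> a j = b j) -> mono f n a x = mono f n b x.
Proof.
elim: n x => [|n IH] x h //=.
rewrite h // IH // => j hj; apply: h; exact: ltnW.
Qed.

Lemma mono_zero T (f : nat -> T -> T) n x : mono f n (fun _ => 0%N) x = x.
Proof. by elim: n x => [|n IH] x //=. Qed.

Lemma iter_comm T (f h : T -> T) k y : (forall y, h (f y) = f (h y)) ->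
  h (iter k f y) = iter k f (h y).
Proof. by move=> c; elim: k => [|k IH] //=; rewrite c IH. Qed.

Lemma mono_comm T (f : nat -> T -> T) (h : T -> T) n a y :
  (forall j y, (j < n)%N -> h (f j y) = f j (h y)) -> h (mono f n a y) = mono f n a (h y).
Proof.
elim: n y => [|n IH] y c //=.
rewrite IH; last by move=> j z hj; apply: c; exact: ltnW.
by rewrite iter_comm // => z; apply: c.
Qed.

Lemma mono_add T (f : nat -> T -> T) n a b x :
  (forall j k y, (j < n)%N -> (k < n)%N -> f j (f k y) = f k (f j y)) ->
  mono f n (fun j => (a j + b j)%N) x = mono f n b (mono f n a x).
Proof.
elim: n x => [|n IH] x c //=.
rewrite IH; last by move=> j k y hj hk; apply: c; exact: ltnW.
rewrite [in RHS](mono_comm (h := iter (b n) (f n))); last first.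
  move=> j y hj; rewrite iter_comm // => z; apply: c => //; exact: ltnW.
by rewrite addnC iterD.
Qed.

Lemma mono_unit T (f : nat -> T -> T) n j y : (j < n)%N ->
  mono f n (fun k => nat_of_bool (k == j)) y = f j y.
Proof.
elim: n y => [|n IH] y hj //=.
rewrite ltnS leq_eqVlt in hj; case/orP: hj => [/eqP ej|hj].
  subst j; rewrite eqxx /=.
  rewrite (@mono_ext _ f n _ (fun _ => 0%N)) ?mono_zero //.
  by move=> k hk; rewrite (ltn_eqF hk).
by rewrite (gtn_eqF hj) /= IH.
Qed.

Lemma Psum (R : comPzRingType) (M : lmodType R) (P : M -> Prop) (T : eqType) (s : seq T) (f : T -> M) :
  is_submod P -> (forall t, t \in s -> P (f t)) -> P (\sum_(t <- s) f t).
Proof.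
case=> h0 hD _; elim: s => [|t s IH] h; first by rewrite big_nil.
rewrite big_cons; apply: hD; first by apply: h; rewrite mem_head.
by apply: IH => u hu; apply: h; rewrite in_cons hu orbT.
Qed.

Lemma Pfilt (R : comPzRingType) (M : lmodType R) (P : M -> Prop) (T : Type) (s : seq T) (Q : pred T) (f : T -> M) :
  is_submod P -> (forall t, Q t -> P (f t)) -> P (\sum_(t <- s | Q t) f t).
Proof.
case=> h0 hD _ h; elim: s => [|t s IH]; first by rewrite big_nil.
rewrite big_cons; case: ifP => // hq; apply: hD => //; exact: h.
Qed.

Theorem lemma3p3 (A0 : comPzRingType) (g : nat) (d : 'I_g -> nat)
    (M : lmodType A0) (Y : 'I_g -> M -> M) (H : int -> int -> M -> Prop) :
  noetherian A0 ->
  (forall j (a : A0) (x y : M), Y j (a *: x + y) = a *: Y j x + Y j y) ->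
  (forall j k (x : M), Y j (Y k x) = Y k (Y j x)) ->
  Z2graded H ->
  (forall j i v x, H i v x -> H (i + (d j)%:Z) (v + 1) (Y j x)) ->
  fin_gen Y ->
  exists v0 : int,
    (forall v, v0 <= v -> rho_is_minfty H v) \/
    (exists (j : 'I_g) (c : int), forall v, v0 <= v -> rho_is H v ((d j)%:Z * v + c)).
Proof.
move=> _ hlin hcomm [Hsub Hdec Hind] hdeg [gens hgens].
pose Yn (j : nat) : M -> M := match insub j with Some o => Y o | None => id end.
pose dn (j : nat) : nat := match insub j with Some o => d o | None => 0%N end.
have Yn_ord : forall o : 'I_g, Yn o = Y o by move=> o; rewrite /Yn valK.
have dn_ord : forall o : 'I_g, dn o = d o by move=> o; rewrite /dn valK.
have Yadd : forall j x y, Y j (x + y) = Y j x + Y j y.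
  by move=> j x y; rewrite -{1}(scale1r x) hlin scale1r.
have Y0 : forall j, Y j 0 = 0.
  move=> j; have h := Yadd j 0 0; rewrite addr0 in h.
  have : Y j 0 + 0 = Y j 0 + Y j 0 by rewrite addr0 -h.
  by move/addrI.
have Yncomm : forall j k z, Yn j (Yn k z) = Yn k (Yn j z).
  by move=> j k z; rewrite /Yn; case: (insub j) => [oj|]; case: (insub k) => [ok|] //=.
have Yncomm' : forall j k z, (j < g)%N -> (k < g)%N -> Yn j (Yn k z) = Yn k (Yn j z).
  by move=> j k z _ _; apply: Yncomm.
have iter0 : forall k j, iter k (Yn j) 0 = 0.
  move=> k j; elim: k => [|k IH] //=; rewrite IH /Yn; case: insub => //= o; exact: Y0.
have mono0 : forall n al, mono Yn n al 0 = 0.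
  by elim => [|n IH] al //=; rewrite iter0 IH.
have Hiter : forall (o : 'I_g) (k : nat) (a b : int) (x : M), H a b x ->
    H (a + k%:Z * (d o)%:Z) (b + k%:Z) (iter k (Y o) x).
  move=> o; elim => [|k IH] a b x hx /=; first by rewrite mul0r !addr0.
  have := hdeg o _ _ _ (IH a b x hx).
  have -> : a + k%:Z * (d o)%:Z + (d o)%:Z = a + (k.+1)%:Z * (d o)%:Z.
    have -> : (k.+1)%:Z = k%:Z + 1 by lia.
    ring.
  by have -> : b + k%:Z + 1 = b + (k.+1)%:Z by lia.
have swap3 : forall u w z : int, u + (z + w) = u + w + z by move=> *; ring.
have Hmono : forall n (a b : int) (x : M) (al : nat -> nat), (n <= g)%N -> H a b x ->
    H (a + \sum_(j < n) (al j)%:Z * (dn j)%:Z) (b + \sum_(j < n) (al j)%:Z) (mono Yn n al x).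
  elim => [|n IH] a b x al hn hx /=; first by rewrite !big_ord0 !addr0.
  have := IH (a + (al n)%:Z * (dn n)%:Z) (b + (al n)%:Z) (iter (al n) (Yn n) x) al (ltnW hn).
  rewrite !big_ord_recr /= !swap3; apply.
  have -> : Yn n = Y (Ordinal hn) by rewrite -Yn_ord.
  have -> : dn n = d (Ordinal hn) by rewrite -dn_ord.
  exact: Hiter.
have [hs [hsH hsgen]] : exists hs : seq (M * (int * int)),
    (forall h, h \in hs -> H h.2.1 h.2.2 h.1) /\
    (forall P : M -> Prop, is_submod P -> (forall h, h \in hs -> P h.1) -> forall x, x \in gens -> P x).
  clear hgens; elim: gens => [|x gs [hs [h1 h2]]]; first by exists [::].
  have [s [f [hf ex]]] := Hdec x.
  exists ([seq (f p, p) | p <- s] ++ hs); split.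
    move=> h; rewrite mem_cat => /orP[/mapP[p _ ->]|]; [exact: hf | exact: h1].
  move=> P hP hall y; rewrite in_cons => /orP[/eqP ->|hy].
    rewrite ex; apply: Psum => // t ht.
    by apply: (hall (f t, t)); rewrite mem_cat map_f.
  by apply: h2 => // h hh; apply: hall; rewrite mem_cat hh orbT.
pose m k := (nth (0, (0, 0)) hs k).1.
pose a k := (nth (0, (0, 0)) hs k).2.1.
pose b k := (nth (0, (0, 0)) hs k).2.2.
have hm : forall k, H (a k) (b k) (m k).
  move=> k; case: (ltnP k (size hs)) => hk.
    by apply: hsH; exact: mem_nth.
  by rewrite /m /a /b nth_default //=; case: (Hsub 0 0).
have mk0 : forall k, (size hs <= k)%N -> m k = 0 by move=> k hk; rewrite /m nth_default.
pose term (t : A0 * nat * (nat -> nat)) := t.1.1 *: mono Yn g t.2 (m t.1.2).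
pose Comb x := exists s, x = \sum_(t <- s) term t.
have Yn_mono : forall (o : 'I_g) al y,
    Y o (mono Yn g al y) = mono Yn g (fun j => (al j + (j == nat_of_ord o))%N) y.
  by move=> o al y; rewrite mono_add // mono_unit // Yn_ord.
have Ysum : forall j (s : seq (A0 * nat * (nat -> nat))),
    Y j (\sum_(t <- s) term t) = \sum_(t <- s) t.1.1 *: Y j (mono Yn g t.2 (m t.1.2)).
  move=> j; elim => [|t s IH]; first by rewrite !big_nil Y0.
  by rewrite !big_cons hlin IH.
have CombS : is_submod Comb.
  split.
  - by exists [::]; rewrite big_nil.
  - by move=> x y [s1 ->] [s2 ->]; exists (s1 ++ s2); rewrite big_cat.
  - move=> c x [s ->]; exists [seq (c * t.1.1, t.1.2, t.2) | t <- s].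
    rewrite big_map scaler_sumr; apply: eq_bigr => t _; by rewrite /term /= scalerA.
have Comb_all : forall x, Comb x.
  apply: hgens => //.
  - move=> j x [s ->].
    exists [seq (t.1.1, t.1.2, fun k => (t.2 k + (k == nat_of_ord j))%N) | t <- s].
    by rewrite Ysum big_map; apply: eq_bigr => t _; rewrite /term /= Yn_mono.
  - move=> x hx; apply: hsgen hx => // h hh.
    exists [:: (1, index h hs, fun _ => 0%N)].
    by rewrite big_seq1 /term /= scale1r mono_zero /m nth_index.
pose Q k v i := exists al, mono Yn g al (m k) <> 0 /\ v = b k + sz g al /\ i = a k + wt g dn al.
have termH : forall t, H (a t.1.2 + wt g dn t.2) (b t.1.2 + sz g t.2) (term t).
  move=> t; case: (Hsub (a t.1.2 + wt g dn t.2) (b t.1.2 + sz g t.2)) => _ _ hS.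
  by apply: hS; apply: Hmono => //; apply: hm.
have piece_iff : forall i v, piece_nz H i v <-> exists k, (k < size hs)%N /\ Q k v i.
  move=> i v; split; last first.
    case=> k [hk [al [hnz [-> ->]]]]; exists (mono Yn g al (m k)); split => //.
    exact: Hmono (hm k).
  case=> x [hx nx]; have [s ex] := Comb_all x; apply: NNPP => hno.
  pose deg (t : A0 * nat * (nat -> nat)) := (a t.1.2 + wt g dn t.2, b t.1.2 + sz g t.2).
  have tz : forall t, deg t == (i, v) -> mono Yn g t.2 (m t.1.2) = 0.
    move=> t /eqP [e1 e2]; apply: NNPP => hnz; apply: hno; exists t.1.2; split.
      rewrite ltnNge; apply/negP => hk; apply: hnz; by rewrite mk0 // mono0.
    by exists t.2; split => //; split.
  pose F p := (if p == (i, v) then - x else 0) + \sum_(t <- s | deg t == p) term t.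
  have FH : forall p, H p.1 p.2 (F p).
    move=> p; have hP := Hsub p.1 p.2; case: (hP) => h0 hD hS; apply: hD.
      case: eqP => [e|_] //=; rewrite -scaleN1r; apply: hS; rewrite e; exact: hx.
    by apply: Pfilt => // t /eqP <-; apply: termH.
  have hiv : (i, v) \in undup ((i, v) :: map deg s) by rewrite mem_undup mem_head.
  have hD : uniq (undup ((i, v) :: map deg s)) by apply: undup_uniq.
  set D := undup ((i, v) :: map deg s) in hiv hD *.
  have hsum : \sum_(p <- D) F p = 0.
    rewrite /F big_split (bigD1_seq (i, v)) // eqxx big1 ?addr0; last first.
      by move=> p /negbTE ->.
    have -> : \sum_(p <- D) \sum_(t <- s | deg t == p) term t = \sum_(t <- s) term t.
      under eq_bigr do rewrite big_mkcond.
      rewrite exchange_big.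
      have gen : forall s0, all (preim deg (mem D)) s0 ->
          \sum_(t <- s0) \sum_(p <- D) (if deg t == p then term t else 0) = \sum_(t <- s0) term t.
        elim => [|t s0 IH]; first by rewrite !big_nil.
        move=> /andP[ht hs0]; rewrite !big_cons IH //; congr (_ + _).
        rewrite (bigD1_seq (deg t)) // eqxx big1 => [|p hp].
          by rewrite /= addr0.
        by rewrite eq_sym (negbTE hp).
      apply: gen; rewrite -all_map; apply/allP => p hp.
      have hpD : p \in D by rewrite /D mem_undup in_cons hp orbT.
      exact: hpD.
    by rewrite -ex /= addr0 addNr.
  have := Hind _ F hD FH hsum (i, v) hiv.
  rewrite /F eqxx big1 ?addr0; last first.
    by move=> t ht; rewrite /term (tz t ht) scaler0.
  by move/eqP; rewrite oppr_eq0 => /eqP.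
have ELk : forall k, EL g dn (Q k).
  move=> k.
  pose U al := mono Yn g al (m k) = 0.
  have hU : upset g U.
    move=> al be hle hal.
    rewrite /U (@mono_ext _ Yn g be (fun j => (al j + (be j - al j))%N)); last first.
      by move=> j hj; rewrite subnKC // hle.
    by rewrite mono_add // hal mono0.
  have [kk [LL [hL1 hL2]]] := dickson hU.
  have := EL_shift (a k) (b k) (SL_EL g dn LL kk (fun _ => None)).
  apply: EL_ext => v i; split.
    case=> al [[_ hs'] [ev ei]]; exists al; split.
      move=> h0; have [s [hs1 hle]] := hL2 al h0; exact: hs' s hs1 hle.
    split; [rewrite -ev | rewrite -ei]; ring.
  case=> al [hnz [ev ei]]; exists al; split; [split|].
  - by move=> j mm _.
  - move=> s hs1 hle; apply: hnz; exact: hU _ _ hle (hL1 s hs1).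
  - split; [rewrite ev | rewrite ei]; ring.
have := EL_bigor (fun k (_ : (k < size hs)%N) => ELk k).
move=> /(EL_ext (fun v i => iff_sym (piece_iff i v))) [v0 hv0].
exists v0; case: hv0 => [h|[j [c [hj h]]]]; [left|right].
  by move=> v hv i; apply: h v hv i.
exists (Ordinal hj), c => v hv; have [h1 h2] := h v hv.
by rewrite -dn_ord; split.
Qed.
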